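(* Assume the setup in the context, with the fine-tuning regime and local smoothness with radius $r\ge 2\sqrt{C}$. Let $0<\epsilon\le 1$ be such that $|\langle\tau_i,\tau_j\rangle|\le\epsilon\|\tau_i\|\|\tau_j\|$ for all $i\neq j$. Let $\alpha_1,\dots,\alpha_T\ge 0$ with $\sum_{i=1}^T\alpha_i=1$, and set $\theta^T_{\mathrm{Add}}=\theta_0+\sum_{i=1}^T\alpha_i\tau_i$. Then for every $i\in[T]$, $$\mathcal{L}_i(\theta^T_{\mathrm{Add}})-\mathcal{L}_i(\theta_i)\le L_iC(1+\epsilon).$$
   Context: Setup: $\theta_0\in\mathbb{R}^d$ is a pretrained parameter vector; $\theta_1,\dots,\theta_T\in\mathbb{R}^d$ are fine-tuned parameters and $\tau_i:=\theta_i-\theta_0$ are task vectors. For each task $i$, $\mathcal{L}_i:\mathbb{R}^d\to\mathbb{R}$ is a differentiable loss (population risk). Norms are Euclidean. Fine-tuning regime: $\nabla\mathcal{L}_i(\theta_i)=0$ for all $i\in[T]$, and there is $C>0$ with $\|\tau_i\|^2\le C$ for all $i$. Local smoothness with radius $r>0$: for each $i$ there is $L_i\ge 0$ such that for all $\theta$ with $\|\theta-\theta_i\|\le r$, $\big|\mathcal{L}_i(\theta)-\mathcal{L}_i(\theta_i)-\langle\theta-\theta_i,\nabla\mathcal{L}_i(\theta_i)\rangle\big|\le\frac{L_i}{2}\|\theta-\theta_i\|^2$. *)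

(* Defs.v *)
From HB Require Import structures.
From mathcomp Require Import all_boot all_order all_algebra.
From mathcomp Require Import all_classical all_reals all_analysis.
Set Implicit Arguments. Unset Strict Implicit. Unset Printing Implicit Defensive.
Import Order.TTheory GRing.Theory Num.Theory.
Import numFieldNormedType.Exports.
Local Open Scope ring_scope.

Definition dotv {R : realType} {d : nat} (u v : 'rV[R]_d) : R :=
  \sum_(j < d) u ord0 j * v ord0 j.

(* Euclidean norm on R^d (the library's norm on 'rV is the sup norm) *)
Definition enorm {R : realType} {d : nat} (u : 'rV[R]_d) : R :=
  Num.sqrt (dotv u u).

(* Main.v *)
Require Import Defs.
From HB Require Import structures.
From mathcomp Require Import all_boot all_order all_algebra.
From mathcomp Require Import all_classical all_reals all_analysis.
From mathcomp Require Import lra ring.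
Set Warnings "-all".
Import Order.TTheory GRing.Theory Num.Theory.
Import numFieldNormedType.Exports.
Local Open Scope ring_scope.

Section D.
Context {R : realType} {d : nat}.
Implicit Types u v w : 'rV[R]_d.

Lemma dotvC u v : dotv u v = dotv v u.
Proof. by apply: eq_bigr => j _; rewrite mulrC. Qed.

Lemma dotvDl u v w : dotv (u + v) w = dotv u w + dotv v w.
Proof. by rewrite /dotv -big_split; apply: eq_bigr => j _; rewrite mxE mulrDl. Qed.

Lemma dotvZl a u w : dotv (a *: u) w = a * dotv u w.
Proof. by rewrite /dotv mulr_sumr; apply: eq_bigr => j _; rewrite mxE mulrA. Qed.

Lemma dotvNl u w : dotv (- u) w = - dotv u w.
Proof. by rewrite -scaleN1r dotvZl mulN1r. Qed.

Lemma dotv0l w : dotv 0 w = 0.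
Proof. by rewrite /dotv big1 // => j _; rewrite mxE mul0r. Qed.

Lemma dotv_suml (I : finType) (f : I -> 'rV[R]_d) w :
  dotv (\sum_i f i) w = \sum_i dotv (f i) w.
Proof.
apply: (big_ind2 (fun a b => dotv a w = b)) => //.
  by rewrite dotv0l.
by move=> x1 x2 y1 y2 <- <-; rewrite dotvDl.
Qed.

Lemma dotv_sumr (I : finType) (f : I -> 'rV[R]_d) w :
  dotv w (\sum_i f i) = \sum_i dotv w (f i).
Proof. by rewrite dotvC dotv_suml; apply: eq_bigr => i _; rewrite dotvC. Qed.

Lemma dotv_ge0 u : 0 <= dotv u u.
Proof. by apply: sumr_ge0 => j _; rewrite -expr2 sqr_ge0. Qed.

Lemma enorm_sq u : enorm u ^+ 2 = dotv u u.
Proof. by rewrite /enorm sqr_sqrtr // dotv_ge0. Qed.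

Lemma dotvB u v w : dotv (u - v) w = dotv u w - dotv v w.
Proof. by rewrite dotvDl dotvNl. Qed.

Lemma dotv_le u v : dotv u v <= (dotv u u + dotv v v) / 2.
Proof.
have := dotv_ge0 (u - v).
rewrite dotvB !(dotvC _ (u - v)) !dotvB (dotvC v u) => h.
rewrite ler_pdivlMr //. lra.
Qed.
Lemma dotv_sqB u v : dotv (u - v) (u - v) = dotv u u - 2 * dotv u v + dotv v v.
Proof.
rewrite dotvB !(dotvC _ (u - v)) !dotvB (dotvC v u). lra.
Qed.

Lemma pair_bound (a b : 'rV[R]_d) (C eps : R) : dotv a a <= C -> dotv b b <= C ->
  `|dotv a b| <= eps * enorm a * enorm b -> 0 < eps -> eps <= 1 -> 0 < C ->
  dotv (a - b) (a - b) <= 2 * C * (1 + eps).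
Proof.
move=> ha hb hab e0 e1 C0.
have na : 0 <= enorm a by apply: sqrtr_ge0.
have nb : 0 <= enorm b by apply: sqrtr_ge0.
rewrite -!enorm_sq in ha hb.
have h2 : enorm a * enorm b <= C.
  have := sqr_ge0 (enorm a - enorm b). nra.
rewrite dotv_sqB.
have h3 := ler_norm (dotv a b).
have h4 : - dotv a b <= `|dotv a b|.
  by rewrite -normrN ler_norm.
have h5 : eps * enorm a * enorm b <= eps * C.
  by rewrite -mulrA ler_wpM2l // ltW.
rewrite -!enorm_sq. nra.
Qed.
End D.

Theorem mainTheorem4 (R : realType) (d T : nat)
  (theta0 : 'rV[R]_d) (theta : 'I_T -> 'rV[R]_d)
  (Loss : 'I_T -> 'rV[R]_d -> R)
  (C r eps : R) (Lsm : 'I_T -> R) (alpha : 'I_T -> R) :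
  (* each loss is differentiable *)
  (forall i x, differentiable (Loss i) x) ->
  (* fine-tuning regime: gradient vanishes at theta_i, and ||tau_i||^2 <= C *)
  (forall i v, 'd (Loss i) (theta i) v = 0) ->
  0 < C ->
  (forall i, enorm (theta i - theta0) ^+ 2 <= C) ->
  (* local smoothness with radius r >= 2 sqrt C *)
  0 < r -> 2 * Num.sqrt C <= r ->
  (forall i, 0 <= Lsm i) ->
  (forall i th, enorm (th - theta i) <= r ->
     `| Loss i th - Loss i (theta i) - 'd (Loss i) (theta i) (th - theta i) |
       <= Lsm i / 2 * enorm (th - theta i) ^+ 2) ->
  (* near-orthogonality of task vectors *)
  0 < eps -> eps <= 1 ->
  (forall i j, i != j ->
     `| dotv (theta i - theta0) (theta j - theta0) |
       <= eps * enorm (theta i - theta0) * enorm (theta j - theta0)) ->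
  (* convex weights *)
  (forall i, 0 <= alpha i) -> \sum_(i < T) alpha i = 1 ->
  forall i : 'I_T,
    Loss i (theta0 + \sum_(j < T) alpha j *: (theta j - theta0)) - Loss i (theta i)
      <= Lsm i * C * (1 + eps).
Proof.
move=> _ hd0 C0 hC r0 hr hL hsm e0 e1 horth ha0 ha1 i.
set tau := fun j => theta j - theta0.
set v := fun j => tau j - tau i.
set th := theta0 + _.
have Eu : th - theta i = \sum_(j < T) alpha j *: v j.
  rewrite /v; under eq_bigr => j _ do rewrite scalerBr.
  rewrite sumrB -scaler_suml ha1 scale1r /th /tau.
  set S := \sum_(_ < _) _.
  by rewrite opprB addrA (addrC S).
set K := 2 * C * (1 + eps).
have hD : forall j, dotv (v j) (v j) <= K.
  move=> j; have [->|hji] := eqVneq j i.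
    by rewrite /v subrr dotv0l /K; apply: mulr_ge0; lra.
  rewrite /v /tau /K; apply: pair_bound => //.
  - by rewrite -enorm_sq.
  - by rewrite -enorm_sq.
  - exact: horth.
have hU : dotv (th - theta i) (th - theta i) <= K.
  rewrite Eu dotv_suml.
  apply: (le_trans (y := \sum_(j < T) alpha j * K)); last first.
    by rewrite -mulr_suml ha1 mul1r.
  apply: ler_sum => j _; rewrite dotvZl dotv_sumr.
  apply: ler_wpM2l => //.
  apply: (le_trans (y := \sum_(k < T) alpha k * K)); last first.
    by rewrite -mulr_suml ha1 mul1r.
  apply: ler_sum => k _; rewrite dotvC dotvZl dotvC.
  apply: ler_wpM2l => //.
  apply: le_trans (dotv_le _ _) _.
  have := hD j; have := hD k; lra.
have hK : K <= 4 * C.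
  have : C * eps <= C * 1 by rewrite ler_wpM2l // ltW.
  rewrite /K; lra.
have hn : enorm (th - theta i) <= r.
  apply: le_trans hr.
  have hs : 0 <= Num.sqrt C by apply: sqrtr_ge0.
  rewrite -ler_sqr ?nnegrE ?sqrtr_ge0 //.
  rewrite enorm_sq exprMn sqr_sqrtr; last by apply: ltW.
  lra.
have := hsm i th hn.
rewrite hd0 subr0 enorm_sq => h.
apply: le_trans (ler_norm _) _.
apply: le_trans h _.
have hL2 : 0 <= Lsm i / 2 by apply: divr_ge0 => //; exact: hL.
apply: le_trans (ler_wpM2l hL2 hU) _.
by rewrite /K le_eqVlt; apply/orP; left; apply/eqP; field.
Qed.
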